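(* Let $\{S_{\mathbf a^{*[k]}},\,k\ge0\}$ be a local, bounded (i.e. $\sup_k\|S_{\mathbf a^{*[k]}}\|<\infty$) subdivision scheme that reproduces constants and satisfies Condition A. Then every local subdivision scheme $\{S_{\mathbf a^{[k]}},\,k\ge0\}$ that reproduces constants and is asymptotically similar to $\{S_{\mathbf a^{*[k]}},\,k\ge0\}$ (i.e. $\lim_{k\to\infty}\|\mathbf a^{[k]}-\mathbf a^{*[k]}\|=0$) also satisfies Condition A.
   Context: A subdivision scheme $\{S_{\mathbf a^{[k]}},\,k\ge0\}$ is given by finitely supported masks $\mathbf a^{[k]}=\{a^{[k]}_i\}_{i\in\mathbb Z}$ and operators $(S_{\mathbf a^{[k]}}\mathbf f)_i=\sum_{j\in\mathbb Z}a^{[k]}_{i-2j}f_j$ on $\mathbf f\in\mathbb R^{\mathbb Z}$. Local means: there is a positive integer $N$ with all masks supported in $[-N,N]$. Norms are sup-norms: $\|\mathbf a\|=\sup_i|a_i|$, and $\|S_{\mathbf a}\|=\max(\sum_i|a_{2i}|,\sum_i|a_{2i+1}|)$ (operator sup-norm). The scheme reproduces constants if $\sum_ia^{[k]}_{2i}=\sum_ia^{[k]}_{2i+1}=1$ for all $k$; then its difference scheme $\{S_{\mathbf q^{[k]}}\}$ has masks $q^{[k]}_i=\sum_{j\le i}(-1)^{i-j}a^{[k]}_j$. A scheme reproducing constants satisfies Condition A if there exist integers $K\ge0$, $n>0$ with $\sup_{k\ge K}\|S_{\mathbf q^{[k+n-1]}}\cdots S_{\mathbf q^{[k+1]}}S_{\mathbf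 q^{[k]}}\|<1$. *)

(* Defs.v *)
From Stdlib Require Import Reals ZArith Lra Lia.
Open Scope R_scope.

(* A (non-stationary) scheme: level k -> mask a^[k] : Z -> R. *)
Definition scheme := nat -> Z -> R.

Fixpoint zsum_len (lo : Z) (len : nat) (f : Z -> R) : R :=
  match len with
  | O => 0
  | S m => f lo + zsum_len (lo + 1)%Z m f
  end.

(* sum_{t = lo}^{hi} f t  (empty if hi < lo) *)
Definition zsum (lo hi : Z) (f : Z -> R) : R :=
  zsum_len lo (Z.to_nat (hi - lo + 1)) f.

Definition local_with (N : nat) (a : scheme) : Prop :=
  forall k i, (Z.abs i > Z.of_nat N)%Z -> a k i = 0.

Definition local (a : scheme) : Prop := exists N : nat, (0 < N)%nat /\ local_with N a.

Definition even_abs_sum (N : nat) (m : Z -> R) : R :=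
  zsum (- Z.of_nat N) (Z.of_nat N) (fun l => if Z.even l then Rabs (m l) else 0).
Definition odd_abs_sum (N : nat) (m : Z -> R) : R :=
  zsum (- Z.of_nat N) (Z.of_nat N) (fun l => if Z.even l then 0 else Rabs (m l)).

(* ||S_a|| = max (sum_i |a_{2i}|, sum_i |a_{2i+1}|) *)
Definition mask_opnorm (N : nat) (m : Z -> R) : R :=
  Rmax (even_abs_sum N m) (odd_abs_sum N m).

Definition reproduces_constants (N : nat) (a : scheme) : Prop :=
  forall k,
    zsum (- Z.of_nat N) (Z.of_nat N) (fun l => if Z.even l then a k l else 0) = 1 /\
    zsum (- Z.of_nat N) (Z.of_nat N) (fun l => if Z.even l then 0 else a k l) = 1.

Definition diff_mask (N : nat) (m : Z -> R) : Z -> R :=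
  fun i => zsum (- Z.of_nat N) i
                (fun j => (if Z.even (i - j) then 1 else -1) * m j).

(* (S_m f)_i = sum_j m_{i-2j} f_j, for m supported in [-N,N]; the range of j
   below contains every j with |i - 2j| <= N, so this is the full series. *)
Definition sub_op (N : nat) (m : Z -> R) (f : Z -> R) : Z -> R :=
  fun i => zsum (Z.div (i - Z.of_nat N) 2 - 1) (Z.div (i + Z.of_nat N) 2 + 1)
                (fun j => m (i - 2 * j)%Z * f j).

Fixpoint diff_comp (N : nat) (a : scheme) (k n : nat) (f : Z -> R) : Z -> R :=
  match n with
  | O => f
  | S n' => sub_op N (diff_mask N (a (k + n')%nat)) (diff_comp N a k n' f)
  end.

(* Condition A: exist K >= 0, n > 0 with
   sup_{k >= K} || S_{q^[k+n-1]} ... S_{q^[k]} || < 1  (operator sup-norm on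
   l^oo(Z)), written out: some c < 1 bounds |(T_k f)_i| for all k >= K, all
   f with ||f||_oo <= 1 and all i. *)
Definition conditionA (N : nat) (a : scheme) : Prop :=
  exists (K n : nat), (0 < n)%nat /\
    exists c : R, c < 1 /\
      forall k : nat, (K <= k)%nat ->
        forall f : Z -> R, (forall j, Rabs (f j) <= 1) ->
          forall i, Rabs (diff_comp N a k n f i) <= c.

Definition asymptotically_similar (a astar : scheme) : Prop :=
  forall eps : R, 0 < eps -> exists K : nat, forall k : nat, (K <= k)%nat ->
    forall i, Rabs (a k i - astar k i) <= eps.

(* Main.v *)
Require Import Defs.
From Stdlib Require Import Reals ZArith Lra Lia.
Open Scope R_scope.

Lemma zl_ext lo n f g : (forall t, (lo <= t < lo + Z.of_nat n)%Z -> f t = g t) ->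
  zsum_len lo n f = zsum_len lo n g.
Proof.
  revert lo; induction n as [|n IH]; intros lo H; simpl; auto.
  rewrite H by lia. f_equal. apply IH. intros t Ht; apply H; lia.
Qed.

Lemma zl_minus lo n f g : zsum_len lo n f - zsum_len lo n g = zsum_len lo n (fun t => f t - g t).
Proof. revert lo; induction n as [|n IH]; intros lo; simpl. lra. rewrite <- IH. lra. Qed.

Lemma zl_scal lo n c f : c * zsum_len lo n f = zsum_len lo n (fun t => c * f t).
Proof. revert lo; induction n as [|n IH]; intros lo; simpl. lra. rewrite <- IH. lra. Qed.

Lemma zl_split lo n1 n2 f : zsum_len lo (n1 + n2) f = zsum_len lo n1 f + zsum_len (lo + Z.of_nat n1) n2 f.
Proof.
  revert lo; induction n1 as [|n1 IH]; intros lo; simpl.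
  - replace (lo + 0)%Z with lo by lia. lra.
  - rewrite IH. replace (lo + 1 + Z.of_nat n1)%Z with (lo + Z.pos (Pos.of_succ_nat n1))%Z by lia. lra.
Qed.

Lemma zl_zero lo n f : (forall t, (lo <= t < lo + Z.of_nat n)%Z -> f t = 0) -> zsum_len lo n f = 0.
Proof.
  revert lo; induction n as [|n IH]; intros lo H; simpl; auto.
  rewrite H by lia. rewrite IH. lra. intros t Ht; apply H; lia.
Qed.

Lemma zl_bound lo n f B : (forall t, Rabs (f t) <= B) -> Rabs (zsum_len lo n f) <= INR n * B.
Proof.
  intros H. assert (0 <= B) by (specialize (H 0%Z); pose proof (Rabs_pos (f 0%Z)); lra).
  revert lo; induction n as [|n IH]; intros lo; simpl.
  - rewrite Rabs_R0; lra.
  - eapply Rle_trans. apply Rabs_triang. specialize (IH (lo+1)%Z). specialize (H lo).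
    destruct n; simpl in *; lra.
Qed.

Lemma zl_nonneg lo n f : (forall t, 0 <= f t) -> 0 <= zsum_len lo n f.
Proof. intros H; revert lo; induction n; intros lo; simpl. lra. specialize (H lo); specialize (IHn (lo+1)%Z); lra. Qed.

Lemma zl_term lo n f t : (forall s, 0 <= f s) -> (lo <= t < lo + Z.of_nat n)%Z -> f t <= zsum_len lo n f.
Proof.
  intros H; revert lo; induction n; intros lo Ht; simpl. lia.
  destruct (Z.eq_dec t lo). subst. pose proof (zl_nonneg (lo+1) n f H); lra.
  pose proof (IHn (lo+1)%Z ltac:(lia)). specialize (H lo). lra.
Qed.

Lemma zs_supp lo hi a b f : (lo <= a)%Z -> (b <= hi)%Z ->
  (forall t, (lo <= t <= hi)%Z -> ~ (a <= t <= b)%Z -> f t = 0) -> zsum lo hi f = zsum a b f.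
Proof.
  intros H1 H2 H. unfold zsum.
  destruct (Z_le_gt_dec a b).
  - replace (Z.to_nat (hi - lo + 1)) with ((Z.to_nat (a - lo) + Z.to_nat (b - a + 1)) + Z.to_nat (hi - b))%nat by lia.
    rewrite !zl_split. rewrite (zl_zero lo), (zl_zero (_ + _)%Z (Z.to_nat (hi - b))).
    replace (lo + Z.of_nat (Z.to_nat (a - lo)))%Z with a by lia. lra.
    + intros t Ht; apply H; lia.
    + intros t Ht; apply H; lia.
  - replace (Z.to_nat (b - a + 1)) with O by lia. simpl.
    apply zl_zero. intros t Ht; apply H; lia.
Qed.

Lemma zs_minus lo hi f g : zsum lo hi f - zsum lo hi g = zsum lo hi (fun t => f t - g t).
Proof. apply zl_minus. Qed.

Lemma zs_ext lo hi f g : (forall t, f t = g t) -> zsum lo hi f = zsum lo hi g.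
Proof. intros; apply zl_ext; auto. Qed.

Lemma zs_bound lo hi f B : (forall t, Rabs (f t) <= B) -> Rabs (zsum lo hi f) <= INR (Z.to_nat (hi - lo + 1)) * B.
Proof. apply zl_bound. Qed.

Lemma zs_term lo hi f t : (forall s, 0 <= f s) -> (lo <= t <= hi)%Z -> f t <= zsum lo hi f.
Proof. intros H Ht; apply zl_term; auto; lia. Qed.

Lemma zs_nonneg lo hi f : (forall t, 0 <= f t) -> 0 <= zsum lo hi f.
Proof. apply zl_nonneg. Qed.

Lemma INR_mono_mul n m B : (n <= m)%nat -> 0 <= B -> INR n * B <= INR m * B.
Proof. intros; apply Rmult_le_compat_r; auto; apply le_INR; auto. Qed.

Definition F (M : nat) (q g : Z -> R) (i : Z) : R :=
  zsum (Z.div (i - Z.of_nat M) 2 - 1) (Z.div (i + Z.of_nat M) 2 + 1) (fun j => q (i - 2 * j)%Z * g j).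

Lemma sub_op_F N M q g i : (N <= M)%nat -> (forall l, (Z.abs l > Z.of_nat N)%Z -> q l = 0) ->
  sub_op N q g i = F M q g i.
Proof.
  intros HNM Hq. unfold sub_op, F. symmetry. apply zs_supp.
  - assert (Z.of_nat N <= Z.of_nat M)%Z by lia.
    apply Z.sub_le_mono_r. apply Z.div_le_mono; lia.
  - assert (Z.of_nat N <= Z.of_nat M)%Z by lia.
    apply Z.add_le_mono_r. apply Z.div_le_mono; lia.
  - intros t Ht Hn. rewrite Hq. lra.
    pose proof (Z.div_mod (i - Z.of_nat N) 2 ltac:(lia)). pose proof (Z.mod_pos_bound (i - Z.of_nat N) 2 ltac:(lia)).
    pose proof (Z.div_mod (i + Z.of_nat N) 2 ltac:(lia)). pose proof (Z.mod_pos_bound (i + Z.of_nat N) 2 ltac:(lia)).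
    lia.
Qed.

Lemma F_count M i : (Z.to_nat ((Z.div (i + Z.of_nat M) 2 + 1) - (Z.div (i - Z.of_nat M) 2 - 1) + 1) <= M + 4)%nat.
Proof.
    pose proof (Z.div_mod (i - Z.of_nat M) 2 ltac:(lia)). pose proof (Z.mod_pos_bound (i - Z.of_nat M) 2 ltac:(lia)).
    pose proof (Z.div_mod (i + Z.of_nat M) 2 ltac:(lia)). pose proof (Z.mod_pos_bound (i + Z.of_nat M) 2 ltac:(lia)).
    lia.
Qed.

Lemma F_bound M q g i B : (forall j, Rabs (q (i - 2 * j)%Z * g j) <= B) -> Rabs (F M q g i) <= (INR M + 4) * B.
Proof.
  intros H. assert (0 <= B) by (specialize (H 0%Z); pose proof (Rabs_pos (q (i - 2 * 0)%Z * g 0%Z)); lra).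
  eapply Rle_trans. apply zs_bound. exact H.
  replace (INR M + 4) with (INR (M + 4)) by (rewrite plus_INR; simpl; lra).
  apply INR_mono_mul; auto. apply F_count.
Qed.

Lemma F_diff M q g q' g' i B : (forall j, Rabs (q (i - 2 * j)%Z * g j - q' (i - 2 * j)%Z * g' j) <= B) ->
  Rabs (F M q g i - F M q' g' i) <= (INR M + 4) * B.
Proof.
  intros H. assert (0 <= B) by (specialize (H 0%Z); pose proof (Rabs_pos (q (i - 2 * 0)%Z * g 0%Z - q' (i - 2 * 0)%Z * g' 0%Z)); lra).
  unfold F. rewrite zs_minus.
  eapply Rle_trans. apply zs_bound. exact H.
  replace (INR M + 4) with (INR (M + 4)) by (rewrite plus_INR; simpl; lra).
  apply INR_mono_mul; auto. apply F_count.
Qed.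

Definition sg (x : Z) : R := if Z.even x then 1 else -1.

Lemma dm_lo N m l : (l < - Z.of_nat N)%Z -> diff_mask N m l = 0.
Proof. intros H. unfold diff_mask, zsum. replace (Z.to_nat (l - - Z.of_nat N + 1)) with O by lia. reflexivity. Qed.

Lemma dm_M N M m l : (N <= M)%nat -> (forall l, (Z.abs l > Z.of_nat N)%Z -> m l = 0) ->
  diff_mask N m l = zsum (- Z.of_nat M) l (fun j => sg (l - j) * m j).
Proof.
  intros HNM Hm. unfold diff_mask. symmetry. apply zs_supp; try lia.
  intros t Ht Hn. rewrite Hm by lia. lra.
Qed.

Lemma sg_sub l j : sg (l - j) = sg l * sg j.
Proof.
  unfold sg. rewrite Z.even_sub. destruct (Z.even l), (Z.even j); simpl; lra.
Qed.

Lemma dm_hi N m l : (forall l, (Z.abs l > Z.of_nat N)%Z -> m l = 0) ->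
  zsum (- Z.of_nat N) (Z.of_nat N) (fun l => if Z.even l then m l else 0) = 1 ->
  zsum (- Z.of_nat N) (Z.of_nat N) (fun l => if Z.even l then 0 else m l) = 1 ->
  (l >= Z.of_nat N)%Z -> diff_mask N m l = 0.
Proof.
  intros Hm He Ho Hl. unfold diff_mask.
  rewrite (zs_supp _ _ (- Z.of_nat N) (Z.of_nat N)); try lia.
  2:{ intros t Ht Hn. rewrite Hm by lia. lra. }
  rewrite (zs_ext _ _ _ (fun j => sg l * ((if Z.even j then m j else 0) - (if Z.even j then 0 else m j)))).
  - unfold zsum. rewrite <- zl_scal, <- zl_minus. fold (zsum (- Z.of_nat N) (Z.of_nat N) (fun l => if Z.even l then m l else 0)).
    fold (zsum (- Z.of_nat N) (Z.of_nat N) (fun l => if Z.even l then 0 else m l)).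
    rewrite He, Ho. lra.
  - intros t. fold (sg (l - t)). rewrite sg_sub. unfold sg at 2. destruct (Z.even t); lra.
Qed.

Lemma Rabs_sg x : Rabs (sg x) = 1.
Proof. unfold sg; destruct (Z.even x). apply Rabs_R1. rewrite Rabs_left; lra. Qed.

Lemma dm_count M l : (l < Z.of_nat M)%Z -> (Z.to_nat (l - - Z.of_nat M + 1) <= 2 * M)%nat.
Proof. lia. Qed.

Lemma q_bound N M m A : (N <= M)%nat -> (forall l, (Z.abs l > Z.of_nat N)%Z -> m l = 0) ->
  zsum (- Z.of_nat N) (Z.of_nat N) (fun l => if Z.even l then m l else 0) = 1 ->
  zsum (- Z.of_nat N) (Z.of_nat N) (fun l => if Z.even l then 0 else m l) = 1 ->
  (forall l, Rabs (m l) <= A) -> forall l, Rabs (diff_mask N m l) <= 2 * INR M * A.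
Proof.
  intros HNM Hm He Ho HA l.
  assert (0 <= A) by (specialize (HA 0%Z); pose proof (Rabs_pos (m 0%Z)); lra).
  destruct (Z_lt_ge_dec l (Z.of_nat M)).
  - rewrite (dm_M N M) by auto. eapply Rle_trans. apply zs_bound with (B := A).
    intros t. rewrite Rabs_mult, Rabs_sg. specialize (HA t). lra.
    replace (2 * INR M) with (INR (2 * M)) by (rewrite mult_INR; simpl; lra).
    apply INR_mono_mul; auto. apply dm_count; auto.
  - rewrite (dm_hi N) by (auto; lia). rewrite Rabs_R0. pose proof (pos_INR M). nra.
Qed.

Lemma q_diff N N' M m m' e : (N <= M)%nat -> (N' <= M)%nat ->
  (forall l, (Z.abs l > Z.of_nat N)%Z -> m l = 0) ->
  zsum (- Z.of_nat N) (Z.of_nat N) (fun l => if Z.even l then m l else 0) = 1 ->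
  zsum (- Z.of_nat N) (Z.of_nat N) (fun l => if Z.even l then 0 else m l) = 1 ->
  (forall l, (Z.abs l > Z.of_nat N')%Z -> m' l = 0) ->
  zsum (- Z.of_nat N') (Z.of_nat N') (fun l => if Z.even l then m' l else 0) = 1 ->
  zsum (- Z.of_nat N') (Z.of_nat N') (fun l => if Z.even l then 0 else m' l) = 1 ->
  (forall l, Rabs (m l - m' l) <= e) -> forall l, Rabs (diff_mask N m l - diff_mask N' m' l) <= 2 * INR M * e.
Proof.
  intros HNM HNM' Hm He Ho Hm' He' Ho' HA l.
  assert (0 <= e) by (specialize (HA 0%Z); pose proof (Rabs_pos (m 0%Z - m' 0%Z)); lra).
  destruct (Z_lt_ge_dec l (Z.of_nat M)).
  - rewrite (dm_M N M), (dm_M N' M) by auto. rewrite zs_minus.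
    eapply Rle_trans. apply zs_bound with (B := e).
    intros t. replace (sg (l - t) * m t - sg (l - t) * m' t) with (sg (l - t) * (m t - m' t)) by ring.
    rewrite Rabs_mult, Rabs_sg. specialize (HA t). lra.
    replace (2 * INR M) with (INR (2 * M)) by (rewrite mult_INR; simpl; lra).
    apply INR_mono_mul; auto. apply dm_count; auto.
  - rewrite (dm_hi N), (dm_hi N') by (auto; lia). rewrite Rminus_0_r, Rabs_R0. pose proof (pos_INR M). nra.
Qed.

Lemma dm_supp N m : (forall l, (Z.abs l > Z.of_nat N)%Z -> m l = 0) ->
  zsum (- Z.of_nat N) (Z.of_nat N) (fun l => if Z.even l then m l else 0) = 1 ->
  zsum (- Z.of_nat N) (Z.of_nat N) (fun l => if Z.even l then 0 else m l) = 1 ->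
  forall l, (Z.abs l > Z.of_nat N)%Z -> diff_mask N m l = 0.
Proof.
  intros Hm He Ho l Hl. destruct (Z_lt_ge_dec l 0).
  apply dm_lo; lia. apply dm_hi; auto; lia.
Qed.

Lemma mask_bound N m C : (forall l, (Z.abs l > Z.of_nat N)%Z -> m l = 0) ->
  mask_opnorm N m <= C -> forall l, Rabs (m l) <= C.
Proof.
  intros Hm HC l. unfold mask_opnorm in HC.
  pose proof (Rmax_l (even_abs_sum N m) (odd_abs_sum N m)).
  pose proof (Rmax_r (even_abs_sum N m) (odd_abs_sum N m)).
  assert (Hnn : forall s, 0 <= (if Z.even s then Rabs (m s) else 0)) by (intros s; destruct (Z.even s); try apply Rabs_pos; lra).
  assert (Hnn' : forall s, 0 <= (if Z.even s then 0 else Rabs (m s))) by (intros s; destruct (Z.even s); try apply Rabs_pos; lra).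
  destruct (Z_le_gt_dec (Z.abs l) (Z.of_nat N)).
  - pose proof (zs_term (- Z.of_nat N) (Z.of_nat N) _ l Hnn ltac:(lia)).
    pose proof (zs_term (- Z.of_nat N) (Z.of_nat N) _ l Hnn' ltac:(lia)).
    unfold even_abs_sum, odd_abs_sum in *. destruct (Z.even l); lra.
  - rewrite Hm by lia. rewrite Rabs_R0.
    pose proof (zs_nonneg (- Z.of_nat N) (Z.of_nat N) _ Hnn). unfold even_abs_sum in *. lra.
Qed.

Lemma prod_bound x y Q G : Rabs x <= Q -> Rabs y <= G -> Rabs (x * y) <= Q * G.
Proof. intros. rewrite Rabs_mult. apply Rmult_le_compat; auto; apply Rabs_pos. Qed.

Lemma prod_diff_bound x y x' y' Q G dx dy : Rabs x <= Q -> Rabs (y - y') <= dy ->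
  Rabs (x - x') <= dx -> Rabs y' <= G -> Rabs (x * y - x' * y') <= Q * dy + dx * G.
Proof.
  intros. replace (x * y - x' * y') with (x * (y - y') + (x - x') * y') by ring.
  eapply Rle_trans. apply Rabs_triang. pose proof (prod_bound x (y - y') Q dy). pose proof (prod_bound (x - x') y' dx G). lra.
Qed.

Fixpoint Eseq (W Q D : R) (m : nat) : R :=
  match m with O => 0 | S m => W * (Q * Eseq W Q D m + D * (W * Q) ^ m) end.

Lemma Eseq_nonneg W Q D m : 0 <= W -> 0 <= Q -> 0 <= D -> 0 <= Eseq W Q D m.
Proof.
  intros. induction m; simpl. lra.
  pose proof (pow_le (W*Q) m ltac:(apply Rmult_le_pos; auto)).
  apply Rmult_le_pos; auto. apply Rplus_le_le_0_compat; apply Rmult_le_pos; auto.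
Qed.

Theorem proposition9 :
  forall (Nstar : nat) (astar : scheme),
    (0 < Nstar)%nat -> local_with Nstar astar ->
    (exists C : R, forall k, mask_opnorm Nstar (astar k) <= C) ->
    reproduces_constants Nstar astar ->
    conditionA Nstar astar ->
  forall (N : nat) (a : scheme),
    (0 < N)%nat -> local_with N a ->
    reproduces_constants N a ->
    asymptotically_similar a astar ->
    conditionA N a.
Proof.
  intros Nstar astar HNs Hlocs [C HC] Hreps [K [n [Hn [c [Hc HA]]]]] N a HN Hloc Hrep Hsim.
  set (M := Nat.max N Nstar).
  assert (HNM : (N <= M)%nat) by lia. assert (HNsM : (Nstar <= M)%nat) by lia.
  assert (Hast : forall k l, Rabs (astar k l) <= C).
  { intros k. apply (mask_bound Nstar); auto. }
  assert (HC0 : 0 <= C) by (pose proof (Hast O 0%Z); pose proof (Rabs_pos (astar O 0%Z)); lra).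
  set (W := INR M + 4). set (Q := 2 * INR M * (C + 1)). set (D := 2 * INR M).
  assert (HW : 0 <= W) by (unfold W; pose proof (pos_INR M); lra).
  assert (HQ : 0 <= Q) by (unfold Q; pose proof (pos_INR M); apply Rmult_le_pos; lra).
  assert (HD : 0 <= D) by (unfold D; pose proof (pos_INR M); lra).
  set (E := Eseq W Q D n).
  assert (HE : 0 <= E) by (apply Eseq_nonneg; auto).
  set (eps := Rmin 1 ((1 - c) / (2 * (E + 1)))).
  assert (Heps : 0 < eps).
  { unfold eps. apply Rmin_pos. lra. apply Rdiv_lt_0_compat; lra. }
  assert (HepsE : eps * E <= (1 - c) / 2).
  { assert (eps <= (1 - c) / (2 * (E + 1))) by apply Rmin_r.
    assert (eps * (E + 1) <= (1 - c) / 2).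
    { apply (Rmult_le_compat_r (E + 1)) in H; [|lra].
      replace ((1 - c) / (2 * (E + 1)) * (E + 1)) with ((1 - c) / 2) in H by (field; lra). exact H. }
    nra. }
  destruct (Hsim eps Heps) as [K2 HK2].
  exists (Nat.max K K2), n. split; auto. exists ((1 + c) / 2). split. lra.
  intros k Hk f Hf i.
  assert (Hlev : forall m l, Rabs (a (k + m)%nat l - astar (k + m)%nat l) <= eps).
  { intros m l. apply HK2. lia. }
  assert (Hepsle1 : eps <= 1) by apply Rmin_l.
  assert (Ha : forall m l, Rabs (a (k + m)%nat l) <= C + 1).
  { intros m l. pose proof (Hlev m l). pose proof (Hast (k + m)%nat l).
    pose proof (Rabs_triang_inv (a (k + m)%nat l) (astar (k + m)%nat l)). lra. }
  assert (IND : forall m i, Rabs (diff_comp N a k m f i) <= (W * Q) ^ m /\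
                            Rabs (diff_comp Nstar astar k m f i) <= (W * Q) ^ m /\
                            Rabs (diff_comp N a k m f i - diff_comp Nstar astar k m f i) <= eps * Eseq W Q D m).
  { induction m as [|m IH]; intros j; simpl.
    - rewrite Rminus_diag, Rabs_R0. specialize (Hf j). lra.
    - destruct (Hrep (k + m)%nat) as [He Ho]. destruct (Hreps (k + m)%nat) as [Hes Hos].
      assert (Hsa : forall l, (Z.abs l > Z.of_nat N)%Z -> a (k + m)%nat l = 0) by (intros; apply Hloc; auto).
      assert (Hsas : forall l, (Z.abs l > Z.of_nat Nstar)%Z -> astar (k + m)%nat l = 0) by (intros; apply Hlocs; auto).
      rewrite (sub_op_F N M) by (auto; apply dm_supp; auto).
      rewrite (sub_op_F Nstar M) by (auto; apply dm_supp; auto).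
      assert (Hq : forall l, Rabs (diff_mask N (a (k + m)%nat) l) <= Q) by (apply q_bound; auto).
      assert (Hqs : forall l, Rabs (diff_mask Nstar (astar (k + m)%nat) l) <= Q).
      { apply q_bound; auto. intros l; pose proof (Hast (k+m)%nat l); lra. }
      assert (Hqd : forall l, Rabs (diff_mask N (a (k + m)%nat) l - diff_mask Nstar (astar (k + m)%nat) l) <= D * eps)
        by (apply q_diff; auto).
      repeat split.
      + replace (W * Q * (W * Q) ^ m) with (W * (Q * (W * Q) ^ m)) by ring.
        apply F_bound. intros l. apply prod_bound; auto. apply IH.
      + replace (W * Q * (W * Q) ^ m) with (W * (Q * (W * Q) ^ m)) by ring.
        apply F_bound. intros l. apply prod_bound; auto. apply IH.
      + replace (eps * (W * (Q * Eseq W Q D m + D * (W * Q) ^ m)))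
          with (W * (Q * (eps * Eseq W Q D m) + (D * eps) * (W * Q) ^ m)) by ring.
        apply F_diff. intros l. apply prod_diff_bound; auto; apply IH. }
  destruct (IND n i) as [_ [_ Hd]].
  assert (Hs : Rabs (diff_comp Nstar astar k n f i) <= c) by (apply HA; auto; lia).
  pose proof (Rabs_triang_inv (diff_comp N a k n f i) (diff_comp Nstar astar k n f i)).
  fold E in Hd. lra.
Qed.
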